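(* Let $P_\star\in\mathcal{P}$, let $P_n$ be the empirical distribution of $n$ i.i.d. draws from $P_\star$, and let $\widehat P_n\in\mathcal{P}$ be an estimate of $P_\star$ that is independent of $P_n$. Write $\pi_n=\pi_{\widehat P_n}$, $\theta_{n,a}=\theta_{\widehat P_n,a}$, $\psi_n=\psi_{\widehat P_n}$, $\phi_n=\phi_{\widehat P_n}$, and define the remainder $\mathcal{R}_n=\psi_n+\mathbb{E}_{Z\sim P_\star}[\phi_n(Z)]-\psi_\star$ (with $\widehat P_n$ held fixed in the expectation). If (i) $\|\pi_n-\pi_\star\|_{L^2(P_{\star,X})}=O_p(n^{-\tau})$ for some scalar $\tau>0$, and (ii) $\|\theta_{n,a}-\theta_{\star,a}\|_{L^2(P_{\star,X};\mathcal{H})}=O_p(n^{-\gamma_a})$ for some scalar $\gamma_a>0$, for each $a\in\{0,1\}$, then $\|\mathcal{R}_n\|_{\mathcal{H}}=O_p\big(n^{-[\tau+\min\{\gamma_1,\gamma_0\}]}\big)$. In particular, if $\tau+\min\{\gamma_1,\gamma_0\}>1/2$, then $\|\mathcal{R}_n\|_{\mathcal{H}}=o_p(n^{-1/2})$.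
   Context: $\mathcal{X},\mathcal{Y}$ Polish; $\mathcal{Z}=\mathcal{X}\times\{0,1\}\times\mathcal{Y}$, $Z=(X,A,Y)$. $\mathcal{P}$ is a dominated, locally nonparametric collection of distributions on $\mathcal{Z}$ with $P_{Y\mid A,X}$ non-degenerate and strong positivity: fixed $\eta>0$ with $\eta\le\pi_P(x)\le1-\eta$ $P_X$-a.e. for all $P\in\mathcal{P}$, where $\pi_P(x)=P(A=1\mid X=x)$. $k,\ell$ bounded characteristic kernels with feature maps $K_x,L_y$; $\mathcal{H}=\mathcal{H}_\mathcal{X}\otimes\mathcal{H}_\mathcal{Y}$ real separable tensor-product RKHS with feature map $\Lambda_{x,y}=K_x\otimes L_y$. For $P\in\mathcal{P}$: $\theta_{P,a}(x)=K_x\otimes\mathbb{E}_P[L_Y\mid A=a,X=x]$, $\psi_P=\mathbb{E}_P[\theta_{P,1}(X)-\theta_{P,0}(X)]$, $\phi_P(x,a,y)=(\frac{a}{\pi_P(x)}-\frac{1-a}{1-\pi_P(x)})(\Lambda_{x,y}-\theta_{P,a}(x))+\theta_{P,1}(x)-\theta_{P,0}(x)-\psi_P$. Subscript $\star$ denotes evaluation at $P_\star$. $\|f\|^2_{L^2(P_{\star,X})}=\int f^2dP_{\star,X}$, $\|g\|^2_{L^2(P_{\star,X};\mathcal{H})}=\int\|g(x)\|^2_{\mathcal{H}}P_{\star,X}(dx)$. *)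

(* Defs.v *)
From HB Require Import structures.
From mathcomp Require Import all_boot all_order all_algebra.
From mathcomp Require Import all_classical all_reals all_analysis.
From mathcomp Require Import measurable_realfun.

Set Implicit Arguments.
Unset Strict Implicit.
Unset Printing Implicit Defensive.

Import Order.TTheory GRing.Theory Num.Theory.
Local Open Scope classical_set_scope.
Local Open Scope ring_scope.

Section Hilbert.
Variables (R : realType) (H : lmodType R) (ip : H -> H -> R).

Definition hnorm (h : H) : R := Num.sqrt (ip h h).

Definition is_hilbert : Prop :=
  [/\ (forall (a : R) (u v w : H), ip (a *: u + v) w = a * ip u w + ip v w),
      (forall u v : H, ip u v = ip v u),
      (forall u : H, 0 <= ip u u),
      (forall u : H, ip u u = 0 -> u = 0) &
      (forall u : nat -> H,
         (forall e : R, 0 < e -> exists N : nat, forall m n : nat,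
            (N <= m)%N -> (N <= n)%N -> hnorm (u m - u n) < e) ->
         exists v : H, forall e : R, 0 < e -> exists N : nat,
            forall n : nat, (N <= n)%N -> hnorm (u n - v) < e)].

Definition hseparable : Prop :=
  exists e : nat -> H, forall (h : H) (eps : R), 0 < eps ->
    exists k : nat, hnorm (h - e k) < eps.

Definition dense_span (T : Type) (F : T -> H) : Prop :=
  forall (h : H) (eps : R), 0 < eps ->
    exists s : seq (R * T), hnorm (h - \sum_(p <- s) p.1 *: F p.2) < eps.

(* m is the (Pettis = Bochner, for the bounded functions used here)
   integral of f : T -> H against mu *)
Definition is_mean d (T : measurableType d) (mu : probability T R)
    (f : T -> H) (m : H) : Prop :=
  forall h : H,
    mu.-integrable setT (fun t => (ip (f t) h)%:E) /\
    (\int[mu]_t (ip (f t) h)%:E = (ip m h)%:E)%E.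

Definition hmean d (T : measurableType d) (mu : probability T R)
    (f : T -> H) : H :=
  xget 0 [set m | is_mean mu f m].

End Hilbert.

Record tensor_rkhs (R : realType) (X Y : Type)
    (HX HY H : lmodType R) := TensorRKHS {
  ipX : HX -> HX -> R;
  ipY : HY -> HY -> R;
  ipH : H -> H -> R;
  featX : X -> HX;
  featY : Y -> HY;
  tens : HX -> HY -> H
}.

Section TensorRKHS.
Variables (R : realType) (dX dY : measure_display)
  (X : measurableType dX) (Y : measurableType dY) (HX HY H : lmodType R).
Variable S : @tensor_rkhs R X Y HX HY H.

Definition kerX (x x' : X) : R := ipX S (featX S x) (featX S x').
Definition kerY (y y' : Y) : R := ipY S (featY S y) (featY S y').

Definition bounded_kernel (T : Type) (k : T -> T -> R) : Prop :=
  exists C : R, forall t : T, k t t <= C.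

Definition characteristic d (T : measurableType d) (HT : lmodType R)
    (ipT : HT -> HT -> R) (feat : T -> HT) : Prop :=
  forall (mu nu : probability T R) (m : HT),
    is_mean ipT mu feat m -> is_mean ipT nu feat m ->
    forall A : set T, measurable A -> mu A = nu A.

Definition valid_tensor_rkhs : Prop :=
  [/\
  [/\ is_hilbert (ipX S), is_hilbert (ipY S), is_hilbert (ipH S) &
      hseparable (ipH S)],
  (* H_X, H_Y are the RKHSs of k, l: the features span densely *)
  dense_span (ipX S) (featX S) /\ dense_span (ipY S) (featY S),
  (* H is the Hilbert tensor product of H_X and H_Y *)
  [/\ (forall (a : R) u u' v, tens S (a *: u + u') v
                              = a *: tens S u v + tens S u' v),
      (forall (a : R) u v v', tens S u (a *: v + v')
                              = a *: tens S u v + tens S u v'),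
      (forall u u' v v', ipH S (tens S u v) (tens S u' v')
                          = ipX S u u' * ipY S v v') &
      dense_span (ipH S) (fun p : HX * HY => tens S p.1 p.2)] &
  [/\ bounded_kernel kerX /\ bounded_kernel kerY,
      (forall x', measurable_fun setT (fun x => kerX x x')),
      (forall y', measurable_fun setT (fun y => kerY y y')),
      characteristic (ipX S) (featX S) &
      characteristic (ipY S) (featY S)]].

Definition Lambda (x : X) (y : Y) : H := tens S (featX S x) (featY S y).

(* Distributions on Z = X * {0,1} * Y, given through their               *)
(* disintegration  P = P_X (dx) . Bern(pi_P(x)) (da) . P_{Y|A=a,X=x}(dy) *)
Record dist_model := DistModel {
  margX : probability X R;
  prop : X -> R;                          (* pi_P(x) = P(A=1 | X=x) *)
  condY : bool -> X -> probability Y R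
}.

Definition wf_model (P : dist_model) : Prop :=
  [/\ measurable_fun setT (prop P),
      (forall x, 0 <= prop P x <= 1) &
      (forall (a : bool) (B : set Y), measurable B ->
         measurable_fun [set: X] (fun x : X => (condY P a x B : \bar R)))].

Definition innerZ (P : dist_model) (g : X -> bool -> Y -> R) (x : X) : R :=
  prop P x * fine (\int[condY P true x]_y (g x true y)%:E)%E
  + (1 - prop P x) * fine (\int[condY P false x]_y (g x false y)%:E)%E.

Definition is_meanZ (P : dist_model) (f : X -> bool -> Y -> H) (m : H) : Prop :=
  forall h : H,
    [/\ (forall (a : bool) (x : X),
           (condY P a x).-integrable setT (fun y => (ipH S (f x a y) h)%:E)),
        (margX P).-integrable setT
           (fun x => (innerZ P (fun x a y => ipH S (f x a y) h) x)%:E) &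
        (\int[margX P]_x (innerZ P (fun x a y => ipH S (f x a y) h) x)%:E
           = (ipH S m h)%:E)%E].

Definition hmeanZ (P : dist_model) (f : X -> bool -> Y -> H) : H :=
  xget 0 [set m | is_meanZ P f m].

Definition theta (P : dist_model) (a : bool) (x : X) : H :=
  tens S (featX S x) (hmean (ipY S) (condY P a x) (featY S)).

Definition psi (P : dist_model) : H :=
  hmean (ipH S) (margX P) (fun x => theta P true x - theta P false x).

Definition phi (P : dist_model) (x : X) (a : bool) (y : Y) : H :=
  ((a%:R / prop P x - (1 - a%:R) / (1 - prop P x)) *: (Lambda x y - theta P a x))
  + theta P true x - theta P false x - psi P.

Definition remainder (Pstar Phat : dist_model) : H :=
  psi Phat + hmeanZ Pstar (phi Phat) - psi Pstar.

End TensorRKHS.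

(* Stochastic order symbols (with outer probability, so that no         *)
(* measurability of the random quantities is presupposed).              *)
Section StochasticOrder.
Variables (R : realType) (d : measure_display) (Omega : measurableType d)
  (Pr : probability Omega R).

Definition bigOp (W : nat -> Omega -> \bar R) (r : R) : Prop :=
  forall eps : R, 0 < eps -> exists M : R, 0 < M /\
    exists N : nat, forall n : nat, (N <= n)%N ->
      exists B : set Omega, [/\ measurable B,
        [set w | ((M * (n%:R `^ (- r)))%:E < W n w)%E] `<=` B &
        (Pr B < eps%:E)%E].

Definition littleop (W : nat -> Omega -> \bar R) (r : R) : Prop :=
  forall eps delta : R, 0 < eps -> 0 < delta ->
    exists N : nat, forall n : nat, (N <= n)%N ->
      exists B : set Omega, [/\ measurable B,
        [set w | ((delta * (n%:R `^ (- r)))%:E < W n w)%E] `<=` B &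
        (Pr B < eps%:E)%E].

End StochasticOrder.

(* Main.v *)
Require Import Defs.
From HB Require Import structures.
From mathcomp Require Import all_boot all_order all_algebra.
From mathcomp Require Import all_classical all_reals all_analysis.
From mathcomp Require Import measurable_realfun.
From mathcomp Require Import ring lra.
Import Order.TTheory GRing.Theory Num.Theory.
Import numFieldNormedType.Exports.
Local Open Scope classical_set_scope.
Local Open Scope ring_scope.
Set Implicit Arguments.
Unset Strict Implicit.
Unset Printing Implicit Defensive.

Section Hilb.
Variables (R : realType) (V : lmodType R) (ip : V -> V -> R).
Hypothesis Hh : is_hilbert ip.

Lemma ip_lin a u v w : ip (a *: u + v) w = a * ip u w + ip v w.
Proof. by case: Hh. Qed.
Lemma ipC u v : ip u v = ip v u.
Proof. by case: Hh. Qed.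
Lemma ip_ge0 u : 0 <= ip u u.
Proof. by case: Hh. Qed.
Lemma ip_def u : ip u u = 0 -> u = 0.
Proof. by case: Hh => _ _ _ H _; exact: H. Qed.

Lemma ip0l w : ip 0 w = 0.
Proof.
have := ip_lin 1 0 0 w; rewrite scale1r addr0 mul1r => h; lra.
Qed.
Lemma ipDl u v w : ip (u + v) w = ip u w + ip v w.
Proof. by have := ip_lin 1 u v w; rewrite scale1r mul1r. Qed.
Lemma ipZl a u w : ip (a *: u) w = a * ip u w.
Proof. by rewrite -[a *: u]addr0 ip_lin ip0l addr0. Qed.
Lemma ipNl u w : ip (- u) w = - ip u w.
Proof. by rewrite -scaleN1r ipZl mulN1r. Qed.
Lemma ipBl u v w : ip (u - v) w = ip u w - ip v w.
Proof. by rewrite ipDl ipNl. Qed.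
Lemma ip0r w : ip w 0 = 0.
Proof. by rewrite ipC ip0l. Qed.
Lemma ipDr u v w : ip w (u + v) = ip w u + ip w v.
Proof. by rewrite ipC ipDl !(ipC w). Qed.
Lemma ipZr a u w : ip w (a *: u) = a * ip w u.
Proof. by rewrite ipC ipZl ipC. Qed.
Lemma ipNr u w : ip w (- u) = - ip w u.
Proof. by rewrite ipC ipNl ipC. Qed.
Lemma ipBr u v w : ip w (u - v) = ip w u - ip w v.
Proof. by rewrite ipDr ipNr. Qed.

Lemma ip_sumr (T : Type) (F : T -> V) (s : seq (R * T)) w :
  ip w (\sum_(p <- s) p.1 *: F p.2) = \sum_(p <- s) p.1 * ip w (F p.2).
Proof.
elim: s => [|p s IH]; first by rewrite !big_nil ip0r.
by rewrite !big_cons ipDr ipZr IH.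
Qed.

Lemma hnorm_ge0 u : 0 <= hnorm ip u.
Proof. exact: sqrtr_ge0. Qed.
Lemma hnorm_sq u : hnorm ip u ^+ 2 = ip u u.
Proof. by rewrite sqr_sqrtr // ip_ge0. Qed.

Lemma ip_ext u v : (forall h, ip u h = ip v h) -> u = v.
Proof.
move=> e; apply/eqP; rewrite -subr_eq0; apply/eqP/ip_def.
by rewrite ipBl e subrr.
Qed.

Lemma CS2 u v : ip u v ^+ 2 <= ip u u * ip v v.
Proof.
have [v0|vn0] := eqVneq (ip v v) 0.
  by rewrite (ip_def v0) ip0r ip0l expr0n /= mulr0.
have vp : 0 < ip v v by rewrite lt0r vn0 ip_ge0.
set t := - (ip u v / ip v v).
have := ip_ge0 (t *: v + u).
rewrite ip_lin !ipDr !ipZr (ipC u v) /t.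
move=> H; rewrite -subr_ge0.
have -> : ip u u * ip v v - ip v u ^+ 2 =
  ip v v * (- (ip v u / ip v v) * (- (ip v u / ip v v) * ip v v + ip v u) +
           (- (ip v u / ip v v) * ip v u + ip u u)).
  by field; rewrite vn0.
apply: mulr_ge0; first exact: ltW.
by move: H; rewrite (ipC u v).
Qed.

Lemma CS u v : `|ip u v| <= hnorm ip u * hnorm ip v.
Proof.
rewrite -(@ler_pXn2r _ 2) ?nnegrE ?mulr_ge0 ?hnorm_ge0 //.
by rewrite exprMn !hnorm_sq real_normK ?num_real // CS2.
Qed.

Lemma hnorm_tri u v : hnorm ip (u + v) <= hnorm ip u + hnorm ip v.
Proof.
rewrite -(@ler_pXn2r _ 2) ?nnegrE ?addr_ge0 ?hnorm_ge0 //.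
rewrite hnorm_sq ipDl !ipDr sqrrD !hnorm_sq (ipC v u).
have h := le_trans (ler_norm (ip u v)) (CS u v).
move: h; rewrite mulr2n; set p := _ * _; set q := ip u v; move=> h.
rewrite -!addrA lerD2l !addrA lerD2r; exact: lerD.
Qed.

Lemma hnormZ a u : hnorm ip (a *: u) = `|a| * hnorm ip u.
Proof.
by rewrite /hnorm ipZl ipZr mulrA -expr2 sqrtrM ?sqr_ge0 // sqrtr_sqr.
Qed.

Lemma hnormN u : hnorm ip (- u) = hnorm ip u.
Proof. by rewrite /hnorm ipNl ipNr opprK. Qed.

Lemma hnorm0 : hnorm ip 0 = 0.
Proof. by rewrite /hnorm ip0l sqrtr0. Qed.

Lemma hnorm_lt_sq u e : 0 < e -> hnorm ip u < e -> ip u u < e ^+ 2.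
Proof.
move=> e0 h; rewrite -hnorm_sq; rewrite ltr_pXn2r ?nnegrE ?hnorm_ge0 ?ltW //.
Qed.


Lemma hnorm_lt u e : 0 < e -> ip u u < e ^+ 2 -> hnorm ip u < e.
Proof.
move=> e0 h; rewrite /hnorm -(gtr0_norm e0) -sqrtr_sqr ltr_sqrt //.
by rewrite exprn_gt0.
Qed.

Lemma archi_inv (x : R) : 0 < x -> exists N : nat, (N.+1%:R)^-1 < x.
Proof.
move=> x0; exists (Num.truncn x^-1).
have h := truncnS_gt (x^-1).
by rewrite -[X in _ < X](invrK x) ltf_pV2 ?posrE ?invr_gt0 ?ltr0n.
Qed.

Lemma inv_le (m n : nat) : (n <= m)%N -> (m.+1%:R)^-1 <= (n.+1%:R)^-1 :> R.
Proof. by move=> nm; rewrite lef_pV2 ?posrE ?ltr0n // ler_nat ltnS. Qed.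

Section Riesz.
Variable l : V -> R.
Hypothesis llin : forall a u v, l (a *: u + v) = a * l u + l v.
Variable C : R.
Hypothesis lbd : forall h, `|l h| <= C * hnorm ip h.

Let l0 : l 0 = 0.
Proof. have := llin 1 0 0; rewrite scale1r addr0 mul1r => h; lra. Qed.
Let lD u v : l (u + v) = l u + l v.
Proof. by have := llin 1 u v; rewrite scale1r mul1r. Qed.
Let lZ a u : l (a *: u) = a * l u.
Proof. by rewrite -[a *: u]addr0 llin l0 addr0. Qed.
Let lB u v : l (u - v) = l u - l v.
Proof. by rewrite lD -scaleN1r lZ mulN1r. Qed.

Let C' := `|C|.
Let C'0 : 0 <= C'. Proof. exact: normr_ge0. Qed.
Let lbd' h : `|l h| <= C' * hnorm ip h.
Proof.
apply: le_trans (lbd h) _; apply: ler_wpM2r; [exact: hnorm_ge0|exact: ler_norm].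
Qed.

Let J h := ip h h / 2 - l h.

Let Jlb h : - (C' ^+ 2 / 2) <= J h.
Proof.
rewrite /J -hnorm_sq; have := lbd' h; have := hnorm_ge0 h.
set n := hnorm ip h => n0 hl.
have : l h <= C' * n by apply: le_trans (ler_norm _) hl.
move=> hl2.
have : 0 <= (n - C') ^+ 2 by apply: sqr_ge0.
rewrite sqrrB => sq. nra.
Qed.

Let E := range (fun h => - J h).
Let Esup : has_sup E.
Proof.
split; first by exists (- J 0), 0.
exists (C' ^+ 2 / 2) => _ [h _ <-]; have := Jlb h; lra.
Qed.
Let sig := - sup E.
Let sig_le h : sig <= J h.
Proof.
rewrite /sig; have := sup_upper_bound Esup; move=> /(_ (- J h)) H.
have : - J h <= sup E by apply: H; exists h.
lra.
Qed.

Let hsex n : exists h, J h < sig + (n.+1%:R)^-1.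
Proof.
have n0 : 0 < (n.+1%:R : R)^-1 by rewrite invr_gt0 ltr0n.
have [e [h _ <-] he] := sup_adherent n0 Esup.
exists h; rewrite /sig; by move: he; rewrite ltrNr opprB addrC.
Qed.

Let mid_eq a b : J a + J b - 2 * J (2^-1 *: (a + b)) = ip (a - b) (a - b) / 4.
Proof.
rewrite /J lZ lD ipZl !ipZr !ipDl !ipDr ?ipNl ?ipNr (ipC b a).
by field.
Qed.

Lemma riesz_ex : exists m, forall h, l h = ip m h.
Proof.
have [hs hsP] := choice hsex.
have cauchy : forall e, 0 < e -> exists N : nat, forall m n : nat,
    (N <= m)%N -> (N <= n)%N -> hnorm ip (hs m - hs n) < e.
  move=> e e0.
  have e8 : 0 < e ^+ 2 / 8 by rewrite divr_gt0 // exprn_gt0.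
  have [N HN] := archi_inv e8.
  exists N => m n Nm Nn; apply: hnorm_lt => //.
  have := mid_eq (hs m) (hs n); have := sig_le (2^-1 *: (hs m + hs n)).
  have := hsP m; have := hsP n; have := inv_le Nm; have := inv_le Nn.
  move: HN; set a := (N.+1%:R)^-1; set b := (m.+1%:R)^-1; set c := (n.+1%:R)^-1.
  set q := ip _ _; lra.
have [m Hm] : exists m, forall e, 0 < e -> exists N : nat,
    forall n : nat, (N <= n)%N -> hnorm ip (hs n - m) < e.
  by case: Hh => _ _ _ _ /(_ hs cauchy).
exists m.
have Jm : J m <= sig.
  apply/ler_addgt0Pr => eps eps0.
  set K := (2 * hnorm ip m + 1) / 2 + C'.
  have K0 : 0 < K by rewrite /K; have := hnorm_ge0 m; have := C'0; lra.
  have mK : 0 < Num.min 1 (eps / (2 * K)).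
    by rewrite lt_min ltr01 divr_gt0 // mulr_gt0.
  have [N1 HN1] := Hm _ mK.
  have e2 : 0 < eps / 2 by rewrite divr_gt0.
  have [N2 HN2] := archi_inv e2.
  pose n := maxn N1 N2.
  have := HN1 n (leq_maxl _ _); rewrite lt_min => /andP[d1 d2].
  have := hsP n; have := inv_le (leq_maxr N1 N2 : (N2 <= n)%N).
  have dJ : J m - J (hs n) <= hnorm ip (hs n - m) * K.
    rewrite /J.
    have -> : ip m m / 2 - l m - (ip (hs n) (hs n) / 2 - l (hs n)) =
       - (ip (hs n - m) (hs n + m) / 2) + l (hs n - m).
      by rewrite lB ipBl !ipDr (ipC m (hs n)); field.
    have c1 := CS (hs n - m) (hs n + m).
    have c2 := hnorm_tri (hs n) m.
    have c3 : hnorm ip (hs n) <= hnorm ip (hs n - m) + hnorm ip m.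
      by have := hnorm_tri (hs n - m) m; rewrite subrK.
    have c4 := lbd' (hs n - m).
    have c5 := hnorm_ge0 (hs n - m).
    have c6 := hnorm_ge0 m.
    move: c1 c2 c3 c4 c5 c6 d1.
    set d := hnorm ip (hs n - m); set A := ip _ _; set B := l _.
    set p := hnorm ip (hs n + m); set r := hnorm ip (hs n); set s := hnorm ip m.
    move=> c1 c2 c3 c4 c5 c6 d1.
    have hp : p <= 2 * s + 1 by lra.
    have h1 : `|A| <= d * (2 * s + 1) by apply: le_trans c1 _; apply: ler_wpM2l.
    move/ler_normlP: h1 => [h3 _]; move/ler_normlP: c4 => [_ h2].
    rewrite /K.
    have -> : d * ((2 * s + 1) / 2 + C') = d * (2 * s + 1) / 2 + C' * d by field.
    move: h3 h2; set X := d * (2 * s + 1); set Y := C' * d; lra.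
  have : hnorm ip (hs n - m) * K <= eps / 2.
    rewrite -ler_pdivlMr //; apply: (le_trans (ltW d2)).
    by rewrite invfM mulrA.
  move: HN2; set b := (N2.+1%:R)^-1; set c := (n.+1%:R)^-1. lra.
move=> v.
apply/eqP; rewrite -subr_eq0; apply/eqP.
set a := l v - ip m v; set q := ip v v.
have q0 : 0 <= q by apply: ip_ge0.
set t := a / (q + 1).
have := le_trans Jm (sig_le (m + t *: v)).
rewrite /J lD lZ !ipDl !ipDr !ipZl !ipZr (ipC v m).
have -> : (ip m m + t * ip m v + (t * ip m v + t * (t * ip v v))) / 2 - (l m + t * l v)
  = (ip m m / 2 - l m) + (- t * a + t * t * q / 2) by rewrite /a /q; field.
rewrite lerDl => h.
have : 0 <= - a ^+ 2 * (q / 2 + 1).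
  have -> : - a ^+ 2 * (q / 2 + 1) = (- t * a + t * t * q / 2) * (q + 1) ^+ 2.
    by rewrite /t; field; rewrite gt_eqF //; lra.
  by apply: mulr_ge0 => //; exact: sqr_ge0.
rewrite mulNr oppr_ge0 pmulr_lle0; last lra.
by move=> h2; apply/eqP; rewrite -sqrf_eq0 eq_le h2 sqr_ge0.
Qed.
End Riesz.
End Hilb.
Section Meas.
Context {R : realType} {d : measure_display} {T : measurableType d}.
Implicit Types (f g : T -> R).

Definition bmf f := measurable_fun setT f /\ exists C, forall x, `|f x| <= C.

Lemma bmf_int (mu : probability T R) f : bmf f -> mu.-integrable setT (EFin \o f).
Proof.
move=> [mf [C hC]]; apply: measurable_bounded_integrable => //.
  exact: (le_lt_trans (probability_le1 mu measurableT) (ltry 1)).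
exists C; split; first exact: num_real.
by move=> M CM x _ /=; apply: le_trans (hC x) (ltW CM).
Qed.

Lemma bmf_cst c : bmf (fun _ => c).
Proof. by split; [exact: measurable_cst|exists `|c|]. Qed.

Lemma bmfD f g : bmf f -> bmf g -> bmf (fun x => f x + g x).
Proof.
move=> [mf [C hC]] [mg [D hD]]; split; first exact: measurable_funD.
by exists (C + D) => x; apply: le_trans (ler_normD _ _) (lerD (hC x) (hD x)).
Qed.

Lemma bmfN f : bmf f -> bmf (fun x => - f x).
Proof.
move=> [mf [C hC]]; split; first exact: measurable_funN.
by exists C => x; rewrite normrN.
Qed.

Lemma bmfB f g : bmf f -> bmf g -> bmf (fun x => f x - g x).
Proof. by move=> hf hg; apply: bmfD => //; exact: bmfN. Qed.

Lemma bmfM f g : bmf f -> bmf g -> bmf (fun x => f x * g x).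
Proof.
move=> [mf [C hC]] [mg [D hD]]; split; first exact: measurable_funM.
by exists (C * D) => x; rewrite normrM; apply: ler_pM.
Qed.

Lemma bmfZ c f : bmf f -> bmf (fun x => c * f x).
Proof. by move=> hf; apply: bmfM => //; exact: bmf_cst. Qed.

Lemma bmf_sum (I : Type) (s : seq I) (F : I -> T -> R) :
  (forall i, bmf (F i)) -> bmf (fun x => \sum_(i <- s) F i x).
Proof.
move=> hF; elim: s => [|i s IH].
  by under eq_fun do rewrite big_nil; exact: bmf_cst.
under eq_fun do rewrite big_cons; exact: bmfD.
Qed.

Section Rint.
Variable mu : probability T R.
Local Notation RI f := (Rintegral mu setT f).

Lemma RintD f g : bmf f -> bmf g -> RI (fun x => f x + g x) = RI f + RI g.
Proof. by move=> hf hg; rewrite RintegralD //; exact: bmf_int. Qed.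
Lemma RintB f g : bmf f -> bmf g -> RI (fun x => f x - g x) = RI f - RI g.
Proof. by move=> hf hg; rewrite RintegralB //; exact: bmf_int. Qed.
Lemma RintZ c f : bmf f -> RI (fun x => c * f x) = c * RI f.
Proof. by move=> hf; rewrite RintegralZl //; exact: bmf_int. Qed.
Lemma Rint_cst c : RI (fun _ => c) = c.
Proof.
rewrite Rintegral_cst // -[RHS]mulr1; congr (_ * _).
exact: (f_equal fine (probability_setT mu)).
Qed.
Lemma Rint_le f g : bmf f -> bmf g -> (forall x, f x <= g x) -> RI f <= RI g.
Proof. by move=> hf hg fg; apply: le_Rintegral => //; exact: bmf_int. Qed.
Lemma Rint_norm f C : bmf f -> (forall x, `|f x| <= C) -> `|RI f| <= C.
Proof.
move=> hf hC; apply: le_trans (le_normr_Rintegral _ _) _ => //; first exact: bmf_int.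
rewrite -[leRHS](Rint_cst C); apply: le_Rintegral => //.
- by apply: bmf_int; case: hf => mf [D hD]; split; [exact: measurableT_comp| exists D => x; rewrite normr_id].
- exact: bmf_int (bmf_cst C).
Qed.
Lemma Rint_EFin f : bmf f -> (\int[mu]_x (f x)%:E = (RI f)%:E)%E.
Proof. by move=> hf; rewrite fineK //; exact: integrable_fin_num (bmf_int mu hf). Qed.
End Rint.

Lemma meas_pw (g : nat -> T -> R) f :
  (forall k, measurable_fun setT (g k)) ->
  (forall x e, 0 < e -> exists N : nat, forall k, (N <= k)%N -> `|f x - g k x| <= e) ->
  measurable_fun setT f.
Proof.
move=> mg hc; apply: (measurable_fun_cvg mg) => x _.
apply/cvgrPdist_le => e e0; have [N HN] := hc x e e0.
by exists N => // k /= Nk; apply: HN.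
Qed.

Lemma meas_approx f :
  (forall e, 0 < e -> exists g, measurable_fun setT g /\ forall x, `|f x - g x| <= e) ->
  measurable_fun setT f.
Proof.
move=> ha.
have hb : forall k : nat, exists g, measurable_fun setT g /\
    forall x, `|f x - g x| <= (k.+1%:R)^-1.
  by move=> k; apply: ha; rewrite invr_gt0 ltr0n.
have [g hg] := choice hb.
apply: (@meas_pw g) => [k|x e e0]; first by case: (hg k).
have [N HN] := archi_inv e0.
exists N => k Nk; case: (hg k) => _ /(_ x) h; apply: le_trans h _.
by apply: ltW; apply: le_lt_trans HN; exact: inv_le.
Qed.
End Meas.
Lemma zero_small (R : realType) (x : R) : (forall e, 0 < e -> `|x| <= e) -> x = 0.
Proof.
move=> H; apply/eqP; rewrite -normr_le0; apply/ler_addgt0Pr => e e0.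
by rewrite add0r; exact: H.
Qed.

Section Weak.
Context {R : realType} (V : lmodType R) (ip : V -> V -> R) (Hh : is_hilbert ip).
Context {d : measure_display} {T : measurableType d}.

Lemma lin_sum (l : V -> R) (I : Type) (G : I -> V) (s : seq (R * I)) :
  (forall a u v, l (a *: u + v) = a * l u + l v) ->
  l (\sum_(p <- s) p.1 *: G p.2) = \sum_(p <- s) p.1 * l (G p.2).
Proof.
move=> llin; have l0 : l 0 = 0.
  by have := llin 1 0 0; rewrite scale1r addr0 mul1r => h; lra.
elim: s => [|p s IH]; first by rewrite !big_nil.
by rewrite !big_cons llin IH.
Qed.

Lemma wm_span (I : Type) (G : I -> V) (F : T -> V) (B : R) :
  dense_span ip G -> (forall t, hnorm ip (F t) <= B) ->
  (forall i, measurable_fun setT (fun t => ip (F t) (G i))) ->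
  forall h, measurable_fun setT (fun t => ip (F t) h).
Proof.
move=> dG hB mG h; apply: meas_approx => e e0.
set B' := `|B| + 1.
have B'0 : 0 < B' by rewrite /B'; have := normr_ge0 B; lra.
have [s hs] := dG h (e / B') (divr_gt0 e0 B'0).
exists (fun t => \sum_(p <- s) p.1 * ip (F t) (G p.2)); split.
  apply: (@measurable_sum _ _ _ _ _ _ (fun p t => p.1 * ip (F t) (G p.2))) => p.
  by apply: measurable_funM; [exact: measurable_cst|exact: mG].
move=> t; rewrite -(ip_sumr Hh) -(ipBr Hh); apply: le_trans (CS Hh _ _) _.
have -> : e = B' * (e / B') by rewrite mulrCA mulfV ?mulr1 // gt_eqF.
apply: ler_pM; rewrite ?hnorm_ge0 //; last exact: ltW.
apply: le_trans (hB t) _; rewrite /B'; have := ler_norm B; lra.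
Qed.

Lemma wm_bound (F : T -> V) B h t : (forall t, hnorm ip (F t) <= B) ->
  `|ip (F t) h| <= B * hnorm ip h.
Proof.
move=> hB; apply: le_trans (CS Hh _ _) _; apply: ler_wpM2r; first exact: hnorm_ge0.
exact: hB.
Qed.

Lemma wm_bmf (F : T -> V) B h : (forall t, hnorm ip (F t) <= B) ->
  measurable_fun setT (fun t => ip (F t) h) -> bmf (fun t => ip (F t) h).
Proof. by move=> hB mF; split => //; exists (B * hnorm ip h) => t; exact: wm_bound. Qed.

Lemma fun_ext_span (I : Type) (G : I -> V) (l1 l2 : V -> R) C1 C2 :
  dense_span ip G ->
  (forall a u v, l1 (a *: u + v) = a * l1 u + l1 v) ->
  (forall a u v, l2 (a *: u + v) = a * l2 u + l2 v) ->
  (forall h, `|l1 h| <= C1 * hnorm ip h) ->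
  (forall h, `|l2 h| <= C2 * hnorm ip h) ->
  (forall i, l1 (G i) = l2 (G i)) -> forall h, l1 h = l2 h.
Proof.
move=> dG lin1 lin2 b1 b2 eqG h.
have l1B u v : l1 (u - v) = l1 u - l1 v.
  have := lin1 (-1) v u; rewrite scaleN1r mulN1r addrC => ->; by rewrite addrC.
have l2B u v : l2 (u - v) = l2 u - l2 v.
  have := lin2 (-1) v u; rewrite scaleN1r mulN1r addrC => ->; by rewrite addrC.
apply/eqP; rewrite -subr_eq0; apply/eqP; apply: zero_small => e e0.
set K := `|C1| + `|C2| + 1.
have K0 : 0 < K by rewrite /K; have := normr_ge0 C1; have := normr_ge0 C2; lra.
have [s hs] := dG h (e / K) (divr_gt0 e0 K0).
set S := \sum_(p <- s) p.1 *: G p.2.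
have eS : l1 S = l2 S.
  by rewrite /S !lin_sum //; apply: eq_bigr => p _; rewrite eqG.
have -> : l1 h - l2 h = l1 (h - S) - l2 (h - S) by rewrite l1B l2B eS; lra.
have n0 := hnorm_ge0 ip (h - S).
have c1 : `|l1 (h - S)| <= `|C1| * hnorm ip (h - S).
  apply: le_trans (b1 _) _; apply: ler_wpM2r => //; exact: ler_norm.
have c2 : `|l2 (h - S)| <= `|C2| * hnorm ip (h - S).
  apply: le_trans (b2 _) _; apply: ler_wpM2r => //; exact: ler_norm.
apply: le_trans (ler_normB _ _) _.
have : K * hnorm ip (h - S) <= e.
  by rewrite -ler_pdivlMl // mulrC; exact: ltW.
rewrite /K; move: c1 c2; set a := `|l1 _|; set b := `|l2 _|; set n := hnorm ip _.
move=> c1 c2; rewrite !mulrDl mul1r; have := normr_ge0 C1; have := normr_ge0 C2.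
move: c1 c2 => h1 h2 _ _ h3; apply: le_trans (lerD h1 h2) _; apply: le_trans h3; rewrite lerDl; exact: hnorm_ge0.
Qed.

Lemma mean_spec (mu : probability T R) (F : T -> V) B :
  (forall t, hnorm ip (F t) <= B) ->
  (forall h, measurable_fun setT (fun t => ip (F t) h)) ->
  is_mean ip mu F (hmean ip mu F) /\
  forall h, ip (hmean ip mu F) h = Rintegral mu setT (fun t => ip (F t) h).
Proof.
move=> hB mF.
have bF h : bmf (fun t => ip (F t) h) by exact: (wm_bmf hB (mF h)).
pose l h := Rintegral mu setT (fun t => ip (F t) h).
have llin a u v : l (a *: u + v) = a * l u + l v.
  rewrite /l -RintZ // -RintD //; last exact: bmfZ.
  by apply: eq_Rintegral => t _; rewrite (ipDr Hh) (ipZr Hh).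
have lb h : `|l h| <= B * hnorm ip h.
  by apply: Rint_norm => // t; exact: wm_bound.
have [m hm] := riesz_ex Hh llin lb.
have ism : is_mean ip mu F m.
  move=> h; split; first exact: bmf_int.
  by rewrite (Rint_EFin mu (bF h)) -hm.
have ishm := xgetPex 0 (ex_intro _ m ism : exists m, [set m | is_mean ip mu F m] m).
split => // h.
have [_ e] := ishm h; move: e; rewrite (Rint_EFin mu (bF h)) => -[->].
by [].
Qed.

End Weak.
Fixpoint gmax {R : realType} (f : nat -> R) (k : nat) : R :=
  if k is k'.+1 then Num.max (gmax f k') (f k) else f 0%N.

Lemma gmax_ge {R : realType} (f : nat -> R) j k : (j <= k)%N -> f j <= gmax f k.
Proof.
elim: k => [|k IH]; first by rewrite leqn0 => /eqP ->.
rewrite leq_eqVlt => /orP[/eqP ->|]; first by rewrite /= le_max lexx orbT.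
by rewrite ltnS => /IH h /=; rewrite le_max h.
Qed.

Lemma gmax_le {R : realType} (f : nat -> R) c k : (forall j, f j <= c) -> gmax f k <= c.
Proof. by move=> h; elim: k => [|k IH] //=; rewrite ge_max IH h. Qed.

Section WNorm.
Context {R : realType} (V : lmodType R) (ip : V -> V -> R) (Hh : is_hilbert ip).
Context {d : measure_display} {T : measurableType d}.

Lemma meas_sqrt (f : T -> R) : measurable_fun setT f ->
  measurable_fun setT (fun t => Num.sqrt (f t)).
Proof.
move=> mf; apply: measurableT_comp mf.
by apply: nondecreasing_measurable => // a b; exact: ler_wsqrtr.
Qed.

Lemma wm_norm (F : T -> V) : hseparable ip ->
  (forall h, measurable_fun setT (fun t => ip (F t) h)) ->
  measurable_fun setT (fun t => hnorm ip (F t)).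
Proof.
case=> e he mF; apply: meas_sqrt.
pose term t j := 2 * ip (F t) (e j) - ip (e j) (e j).
apply: (@meas_pw _ _ _ (fun k t => gmax (term t) k)).
  elim=> [|k IH] /=.
    by apply: measurable_funB; [apply: measurable_funM => //; exact: measurable_cst|exact: measurable_cst].
  apply: measurable_maxr => //.
  by apply: measurable_funB; [apply: measurable_funM => //; exact: measurable_cst|exact: measurable_cst].
move=> t eps eps0.
have up j : term t j <= ip (F t) (F t).
  have := ip_ge0 Hh (F t - e j); rewrite !(ipBl Hh) !(ipBr Hh) (ipC Hh (e j) (F t)).
  rewrite /term; lra.
have m0 : 0 < Num.min 1 eps by rewrite lt_min ltr01.
have [j hj] := he (F t) _ m0.
have hj2 := hnorm_lt_sq Hh m0 hj.
have mm : Num.min 1 eps ^+ 2 <= eps.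
  have h1 : Num.min 1 eps <= eps by rewrite ge_min lexx orbT.
  have h2 : Num.min 1 eps <= 1 by rewrite ge_min lexx.
  rewrite expr2; apply: le_trans h1.
  by rewrite -[leRHS]mul1r; apply: ler_wpM2r => //; exact: ltW.
exists j => k jk.
have g1 := gmax_ge (term t) jk.
have g2 : gmax (term t) k <= ip (F t) (F t) by apply: gmax_le.
have : term t j = ip (F t) (F t) - ip (F t - e j) (F t - e j).
  by rewrite /term !(ipBl Hh) !(ipBr Hh) (ipC Hh (e j) (F t)); lra.
move: g1 g2 hj2 mm; set A := ip (F t) (F t); set B := ip (F t - e j) _.
set G := gmax _ _; set m := Num.min 1 eps ^+ 2 => g1 g2 hj2 mm ht.
rewrite ler_norml; apply/andP; split; lra.
Qed.
End WNorm.
Lemma kern_meas {R : realType} {dX dY : measure_display} {X : measurableType dX}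
    {Y : measurableType dY} (l : X -> probability Y R) :
  (forall U, measurable U -> measurable_fun setT (fun x => (l x U : \bar R))) ->
  forall g, bmf g -> measurable_fun setT (fun x => Rintegral (l x) setT g).
Proof.
move=> ml g hg; have [mg [C hC]] := hg.
have e : (fun x => Rintegral (l x) setT g) =
    (fun x => fine (\int[l x]_y ((g y + C)%:E))%E - C).
  apply: funext => x; have := RintD (l x) hg (bmf_cst C); rewrite Rint_cst => h.
  by rewrite -[fine _]/(Rintegral (l x) setT (fun y => g y + C)) h addrK.
rewrite e; apply: measurable_funB; last exact: measurable_cst.
apply: measurableT_comp => //.
apply: (measurable_fun_integral_kernel (l := fun x => (l x : {measure set Y -> \bar R}))).
- by move=> U mU; exact: ml.
- move=> y; rewrite lee_fin; have := hC y; rewrite ler_norml => /andP[h _]; lra.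
- apply: measurableT_comp => //; apply: measurable_funD => //; exact: measurable_cst.
Qed.

Lemma meas_inv {R : realType} {d : measure_display} {T : measurableType d} (f : T -> R) (e : R) :
  0 < e -> (forall x, e <= f x) -> measurable_fun setT f ->
  measurable_fun setT (fun x => (f x)^-1).
Proof.
move=> e0 fe mf.
have -> : (fun x => (f x)^-1) = (fun x => (Num.max (f x) e)^-1).
  by apply: funext => x; rewrite max_l // fe.
suff h : measurable_fun setT (fun t : R => (Num.max t e)^-1) by exact: (measurableT_comp h mf).
apply: nonincreasing_measurable => // a b ab.
have ha : 0 < Num.max a e by rewrite lt_max e0 orbT.
have hb : 0 < Num.max b e by rewrite lt_max e0 orbT.
rewrite lef_pV2 ?posrE //.
by rewrite ge_max !le_max ab lexx !orbT.
Qed.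
Section Model.
Variables (R : realType) (dX dY : measure_display)
  (X : measurableType dX) (Y : measurableType dY) (HX HY H : lmodType R)
  (S : @tensor_rkhs R X Y HX HY H).
Hypotheses (hX : is_hilbert (ipX S)) (hY : is_hilbert (ipY S)) (hH : is_hilbert (ipH S)).
Hypotheses (dnX : dense_span (ipX S) (featX S)) (dnY : dense_span (ipY S) (featY S)).
Hypothesis dnT : dense_span (ipH S) (fun p : HX * HY => tens S p.1 p.2).
Hypothesis tip : forall u u' v v', ipH S (tens S u v) (tens S u' v') = ipX S u u' * ipY S v v'.
Variables (CX CY : R).
Hypotheses (hCX : forall x, kerX S x x <= CX) (hCY : forall y, kerY S y y <= CY).
Hypotheses (mkX : forall x', measurable_fun setT (fun x => kerX S x x'))
           (mkY : forall y', measurable_fun setT (fun y => kerY S y y')).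

Local Notation DM := (@dist_model R dX dY X Y).
Let BX := Num.sqrt CX.
Let BY := Num.sqrt CY.
Let BX0 : 0 <= BX. Proof. exact: sqrtr_ge0. Qed.
Let BY0 : 0 <= BY. Proof. exact: sqrtr_ge0. Qed.

Let featX_bd x : hnorm (ipX S) (featX S x) <= BX.
Proof. exact: ler_wsqrtr (hCX x). Qed.
Let featY_bd y : hnorm (ipY S) (featY S y) <= BY.
Proof. exact: ler_wsqrtr (hCY y). Qed.

Let mfX u : measurable_fun setT (fun x => ipX S (featX S x) u).
Proof. exact: (wm_span hX dnX featX_bd mkX). Qed.
Let mfY v : measurable_fun setT (fun y => ipY S (featY S y) v).
Proof. exact: (wm_span hY dnY featY_bd mkY). Qed.

Definition meanY (nu : probability Y R) := hmean (ipY S) nu (featY S).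

Lemma meanY_spec nu v :
  ipY S (meanY nu) v = Rintegral nu setT (fun y => ipY S (featY S y) v).
Proof. exact: ((mean_spec hY nu featY_bd mfY).2 v). Qed.

Lemma meanY_bd nu : hnorm (ipY S) (meanY nu) <= BY.
Proof.
set m := meanY nu.
have h : ipY S m m <= BY * hnorm (ipY S) m.
  rewrite meanY_spec; apply: le_trans (ler_norm _) _.
  apply: Rint_norm; first exact: (wm_bmf hY featY_bd (mfY m)).
  by move=> y; exact: (wm_bound hY m y featY_bd).
have n0 := hnorm_ge0 (ipY S) m.
have [->|np] := eqVneq (hnorm (ipY S) m) 0; first exact: BY0.
have np' : 0 < hnorm (ipY S) m by rewrite lt0r np n0.
move: h; rewrite -(hnorm_sq hY) expr2 ler_pM2r //.
Qed.

Lemma hnorm_tens u v : hnorm (ipH S) (tens S u v) = hnorm (ipX S) u * hnorm (ipY S) v.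
Proof. by rewrite /hnorm tip sqrtrM // ip_ge0. Qed.

Lemma theta_bd (P : DM) a x : hnorm (ipH S) (theta S P a x) <= BX * BY.
Proof. by rewrite /theta hnorm_tens; apply: ler_pM; rewrite ?hnorm_ge0 //; exact: meanY_bd. Qed.

Lemma Lambda_bd x y : hnorm (ipH S) (Lambda S x y) <= BX * BY.
Proof. by rewrite /Lambda hnorm_tens; apply: ler_pM; rewrite ?hnorm_ge0. Qed.

Lemma mthY (P : DM) a v : wf_model P ->
  measurable_fun setT (fun x => ipY S (meanY (condY P a x)) v).
Proof.
case=> _ _ mc.
under eq_fun do rewrite meanY_spec.
apply: kern_meas; first by move=> U mU; exact: mc.
exact: (wm_bmf hY featY_bd (mfY v)).
Qed.

Lemma mtheta (P : DM) a h : wf_model P ->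
  measurable_fun setT (fun x => ipH S (theta S P a x) h).
Proof.
move=> wf; apply: (wm_span hH dnT (theta_bd P a)) => p.
rewrite /theta; under eq_fun do rewrite tip.
apply: measurable_funM; [exact: mfX|exact: mthY].
Qed.

Lemma mLam x h : measurable_fun setT (fun y => ipH S (Lambda S x y) h).
Proof.
apply: (wm_span hH dnT (Lambda_bd x)) => p.
rewrite /Lambda; under eq_fun do rewrite tip.
apply: measurable_funM; [exact: measurable_cst|exact: mfY].
Qed.

Lemma Lam_mean (nu : probability Y R) x h :
  Rintegral nu setT (fun y => ipH S (Lambda S x y) h) =
  ipH S (tens S (featX S x) (meanY nu)) h.
Proof.
have bL h' : bmf (fun y => ipH S (Lambda S x y) h').
  exact: (wm_bmf hH (Lambda_bd x) (mLam x h')).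
apply: (fun_ext_span (C1 := BX * BY) (C2 := BX * BY)
  (l1 := fun h => Rintegral nu setT (fun y => ipH S (Lambda S x y) h))
  (l2 := fun h => ipH S (tens S (featX S x) (meanY nu)) h) dnT) => /= [a u v|a u v|h'|h'|p].
- rewrite -RintZ // -RintD //; last exact: bmfZ.
  by apply: eq_Rintegral => y _; rewrite (ipDr hH) (ipZr hH).
- by rewrite (ipDr hH) (ipZr hH).
- apply: Rint_norm => // y; exact: (wm_bound hH h' y (Lambda_bd x)).
- apply: le_trans (CS hH _ _) _; apply: ler_wpM2r; first exact: hnorm_ge0.
  rewrite hnorm_tens; apply: ler_pM; rewrite ?hnorm_ge0 //; exact: meanY_bd.
- rewrite /Lambda; under eq_Rintegral do rewrite tip.
  rewrite RintZ; last exact: (wm_bmf hY featY_bd (mfY p.2)).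
  by rewrite tip meanY_spec.
Qed.

Lemma psi_spec (P : DM) h : wf_model P ->
  ipH S (psi S P) h =
  Rintegral (margX P) setT (fun x => ipH S (theta S P true x - theta S P false x) h).
Proof.
move=> wf.
have bd x : hnorm (ipH S) (theta S P true x - theta S P false x) <= BX * BY + BX * BY.
  apply: le_trans (hnorm_tri hH _ _) _; rewrite (hnormN hH).
  by apply: lerD; exact: theta_bd.
apply: ((mean_spec hH (margX P) bd _).2 h) => h'.
under eq_fun do rewrite (ipBl hH).
by apply: measurable_funB; exact: mtheta.
Qed.

Hypothesis sepH : hseparable (ipH S).
Variables (Pstar Pn : DM) (eta : R).
Hypotheses (eta0 : 0 < eta) (wfS : wf_model Pstar) (wfN : wf_model Pn).
Hypotheses (bS : forall x, eta <= prop Pstar x <= 1 - eta)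
           (bN : forall x, eta <= prop Pn x <= 1 - eta).

Local Notation pS := (prop Pstar).
Local Notation pN := (prop Pn).
Local Notation thS := (theta S Pstar).
Local Notation thN := (theta S Pn).

Definition coef (a : bool) x : R := a%:R / pN x - (1 - a%:R) / (1 - pN x).
Definition Dv x := thN true x - thN false x - psi S Pn.
Definition gvec x := pS x *: (coef true x *: (thS true x - thN true x) + Dv x)
  + (1 - pS x) *: (coef false x *: (thS false x - thN false x) + Dv x).

Let pN_lb x : eta <= pN x. Proof. by case/andP: (bN x). Qed.
Let pN_ub x : eta <= 1 - pN x. Proof. by case/andP: (bN x) => _ h; rewrite lerBrDr addrC -lerBrDr. Qed.
Let pS_lb x : 0 <= pS x. Proof. by case/andP: (bS x) => h _; exact: le_trans (ltW eta0) h. Qed.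
Let pS_ub x : 0 <= 1 - pS x.
Proof. by case/andP: (bS x) => _ h; rewrite subr_ge0; apply: le_trans h _; rewrite gerBl ltW. Qed.
Let pN_gt0 x : 0 < pN x. Proof. exact: lt_le_trans eta0 (pN_lb x). Qed.
Let pN_lt1 x : 0 < 1 - pN x. Proof. exact: lt_le_trans eta0 (pN_ub x). Qed.
Let mpN : measurable_fun setT pN. Proof. by case: wfN. Qed.
Let mpS : measurable_fun setT pS. Proof. by case: wfS. Qed.

Lemma coef_bd a x : `|coef a x| <= eta^-1.
Proof.
rewrite /coef; case: a => /=.
  rewrite subrr mul0r subr0 mul1r ger0_norm ?invr_ge0 ?(ltW (pN_gt0 x)) //.
  by rewrite lef_pV2 ?posrE.
rewrite mul0r sub0r subr0 mul1r normrN ger0_norm ?invr_ge0 ?(ltW (pN_lt1 x)) //.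
by rewrite lef_pV2 ?posrE.
Qed.

Lemma mcoef a : measurable_fun setT (coef a).
Proof.
apply: measurable_funB; apply: measurable_funM; try exact: measurable_cst.
  exact: meas_inv eta0 pN_lb mpN.
apply: meas_inv eta0 pN_ub _; apply: measurable_funB => //; exact: measurable_cst.
Qed.

Lemma phi_ip x a y h : ipH S (phi S Pn x a y) h =
  coef a x * (ipH S (Lambda S x y) h - ipH S (thN a x) h) + ipH S (Dv x) h.
Proof.
rewrite /phi /Dv /coef.
rewrite !(ipBl hH) (ipDl hH) (ipZl hH) !(ipBl hH).
by ring.
Qed.

Lemma bmf_phi x a h : bmf (fun y => ipH S (phi S Pn x a y) h).
Proof.
have -> : (fun y => ipH S (phi S Pn x a y) h) = (fun y =>
  coef a x * (ipH S (Lambda S x y) h - ipH S (thN a x) h) + ipH S (Dv x) h).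
  by apply: funext => y; exact: phi_ip.
apply: bmfD; last exact: bmf_cst.
apply: bmfZ; apply: bmfB; last exact: bmf_cst.
exact: (wm_bmf hH (Lambda_bd x) (mLam x h)).
Qed.

Lemma int_phi a x h :
  Rintegral (condY Pstar a x) setT (fun y => ipH S (phi S Pn x a y) h) =
  coef a x * (ipH S (thS a x) h - ipH S (thN a x) h) + ipH S (Dv x) h.
Proof.
under eq_Rintegral do rewrite phi_ip.
have bL := wm_bmf hH (Lambda_bd x) (mLam x h).
rewrite RintD; [|apply: bmfZ; apply: bmfB => //; exact: bmf_cst|exact: bmf_cst].
rewrite RintZ; last by apply: bmfB => //; exact: bmf_cst.
by rewrite RintB //; [rewrite !Rint_cst Lam_mean|exact: bmf_cst].
Qed.

Lemma gvec_ip x h : ipH S (gvec x) h =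
  pS x * (coef true x * (ipH S (thS true x) h - ipH S (thN true x) h) + ipH S (Dv x) h)
  + (1 - pS x) * (coef false x * (ipH S (thS false x) h - ipH S (thN false x) h) + ipH S (Dv x) h).
Proof. by rewrite /gvec !(ipDl hH) !(ipZl hH) !(ipDl hH) !(ipZl hH) !(ipBl hH). Qed.

Lemma Dv_ip x h : ipH S (Dv x) h =
  ipH S (thN true x) h - ipH S (thN false x) h - ipH S (psi S Pn) h.
Proof. by rewrite /Dv !(ipBl hH). Qed.

Lemma mgvec h : measurable_fun setT (fun x => ipH S (gvec x) h).
Proof.
under eq_fun do rewrite gvec_ip Dv_ip.
have mS a := @mtheta Pstar a h wfS.
have mN a := @mtheta Pn a h wfN.
have mc := mcoef.
have mD : measurable_fun setT (fun x => ipH S (thN true x) h - ipH S (thN false x) h - ipH S (psi S Pn) h).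
  by apply: measurable_funB; [exact: measurable_funB|exact: measurable_cst].
apply: measurable_funD; apply: measurable_funM.
- exact: mpS.
- apply: measurable_funD => //; apply: measurable_funM => //; exact: measurable_funB.
- by apply: measurable_funB => //; exact: measurable_cst.
- apply: measurable_funD => //; apply: measurable_funM => //; exact: measurable_funB.
Qed.

Let BB := BX * BY.
Let KU := eta^-1 * (BB + BB) + (BB + BB + hnorm (ipH S) (psi S Pn)).

Lemma hnormB_bd (P Q : DM) a b x y : hnorm (ipH S) (theta S P a x - theta S Q b y) <= BB + BB.
Proof.
apply: le_trans (hnorm_tri hH _ _) _; rewrite (hnormN hH).
by apply: lerD; exact: theta_bd.
Qed.

Lemma U_bd a x : hnorm (ipH S) (coef a x *: (thS a x - thN a x) + Dv x) <= KU.
Proof.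
apply: le_trans (hnorm_tri hH _ _) _; rewrite (hnormZ hH).
apply: lerD.
  apply: ler_pM; rewrite ?normr_ge0 ?hnorm_ge0 //; [exact: coef_bd|exact: hnormB_bd].
rewrite /Dv; apply: le_trans (hnorm_tri hH _ _) _; rewrite (hnormN hH).
by rewrite lerD2r; exact: hnormB_bd.
Qed.

Lemma gvec_bd x : hnorm (ipH S) (gvec x) <= KU + KU.
Proof.
apply: le_trans (hnorm_tri hH _ _) _; rewrite !(hnormZ hH).
apply: lerD.
  rewrite -[leRHS]mul1r; apply: ler_pM; rewrite ?normr_ge0 ?hnorm_ge0 ?U_bd //.
  by rewrite ger0_norm //; rewrite -subr_ge0.
rewrite -[leRHS]mul1r; apply: ler_pM; rewrite ?normr_ge0 ?hnorm_ge0 ?U_bd //.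
by rewrite ger0_norm // -subr_ge0 opprB addrC subrK.
Qed.

Lemma innerZ_eq h x :
  innerZ Pstar (fun x a y => ipH S (phi S Pn x a y) h) x = ipH S (gvec x) h.
Proof.
rewrite /innerZ gvec_ip.
have := int_phi true x h; rewrite /Rintegral => ->.
by have := int_phi false x h; rewrite /Rintegral => ->.
Qed.

Lemma Z_spec h : ipH S (hmeanZ S Pstar (phi S Pn)) h =
  Rintegral (margX Pstar) setT (fun x => ipH S (gvec x) h).
Proof.
have [_ ipm] := mean_spec hH (margX Pstar) gvec_bd mgvec.
have bg h' : bmf (fun x => ipH S (gvec x) h') := wm_bmf hH gvec_bd (mgvec h').
have ise : forall h', (fun x => (innerZ Pstar (fun x a y => ipH S (phi S Pn x a y) h') x)%:E)
    = (fun x => (ipH S (gvec x) h')%:E).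
  by move=> h'; apply: funext => x; rewrite innerZ_eq.
have ism : is_meanZ S Pstar (phi S Pn) (hmean (ipH S) (margX Pstar) gvec).
  move=> h'; split.
  - by move=> a x; apply: bmf_int; exact: bmf_phi.
  - by rewrite ise; exact: bmf_int.
  - by rewrite ise Rint_EFin // ipm.
have := xgetPex 0 (ex_intro _ _ ism : exists m, [set m | is_meanZ S Pstar (phi S Pn) m] m).
move=> /(_ h) [_ _]; rewrite ise Rint_EFin // => -[<-].
by [].
Qed.

Definition rvec x := ((pS x - pN x) / pN x) *: (thS true x - thN true x)
  + ((pS x - pN x) / (1 - pN x)) *: (thS false x - thN false x).

Lemma rvec_eq x h : ipH S (rvec x) h =
  ipH S (psi S Pn) h + (ipH S (gvec x) h - ipH S (thS true x - thS false x) h).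
Proof.
rewrite gvec_ip Dv_ip /rvec /coef /= !(ipDl hH) !(ipZl hH) !(ipBl hH) ?(ipNl hH).
have h1 := pN_gt0 x; have h2 := pN_lt1 x.
move: h1 h2; generalize (pS x) (pN x) (ipH S (thS true x) h) (ipH S (thN true x) h)
  (ipH S (thS false x) h) (ipH S (thN false x) h) (ipH S (psi S Pn) h).
move=> a b c1 c2 c3 c4 c5 h1 h2.
rewrite subrr !mul0r subr0 !mul1r ?sub0r ?subr0.
by field; rewrite ?gt_eqF.
Qed.

Lemma bmf_thS h : bmf (fun x => ipH S (thS true x - thS false x) h).
Proof.
apply: (wm_bmf hH (fun x => hnormB_bd Pstar Pstar true false x x)).
under eq_fun do rewrite (ipBl hH).
by apply: measurable_funB; exact: mtheta.
Qed.

Lemma bmf_rvec h : bmf (fun x => ipH S (rvec x) h).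
Proof.
have -> : (fun x => ipH S (rvec x) h) = (fun x =>
  ipH S (psi S Pn) h + (ipH S (gvec x) h - ipH S (thS true x - thS false x) h)).
  by apply: funext => x; exact: rvec_eq.
apply: bmfD; first exact: bmf_cst.
apply: bmfB; last exact: bmf_thS.
exact: (wm_bmf hH gvec_bd (mgvec h)).
Qed.

Lemma rem_ip h : ipH S (remainder S Pstar Pn) h =
  Rintegral (margX Pstar) setT (fun x => ipH S (rvec x) h).
Proof.
rewrite /remainder (ipBl hH) (ipDl hH) Z_spec (@psi_spec Pstar h wfS).
rewrite -addrA -RintB; [|exact: (wm_bmf hH gvec_bd (mgvec h))|exact: bmf_thS].
rewrite -[ipH S (psi S Pn) h](Rint_cst (margX Pstar)) -RintD; last first.
- apply: bmfB; [exact: (wm_bmf hH gvec_bd (mgvec h))|exact: bmf_thS].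
- exact: bmf_cst.
by apply: eq_Rintegral => x _; rewrite rvec_eq.
Qed.

Definition Dn a x := `|pN x - pS x| * hnorm (ipH S) (thN a x - thS a x).

Lemma p01 (P : DM) x : (forall x, eta <= prop P x <= 1 - eta) -> `|prop P x| <= 1.
Proof.
move=> /(_ x) /andP[h1 h2]; rewrite ger0_norm; last exact: le_trans (ltW eta0) h1.
by apply: le_trans h2 _; rewrite gerBl ltW.
Qed.

Lemma bmf_Dn a : bmf (fun x => Dn a x).
Proof.
split.
  apply: measurable_funM.
    by apply: measurableT_comp => //; exact: measurable_funB.
  apply: (wm_norm hH sepH) => h; under eq_fun do rewrite (ipBl hH).
  by apply: measurable_funB; exact: mtheta.
exists ((1 + 1) * (BB + BB)) => x; rewrite /Dn normrM normr_id.
apply: ler_pM; rewrite ?normr_ge0 //.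
  by apply: le_trans (ler_normB _ _) _; apply: lerD; exact: p01.
by rewrite ger0_norm ?hnorm_ge0 //; exact: hnormB_bd.
Qed.

Lemma ip_le_sc c u r : c * ipH S u r <= `|c| * hnorm (ipH S) u * hnorm (ipH S) r.
Proof.
apply: le_trans (ler_norm _) _; rewrite normrM -mulrA.
by apply: ler_wpM2l; [exact: normr_ge0|exact: CS].
Qed.

Lemma coefr_bd x : `|(pS x - pN x) / pN x| <= eta^-1 * `|pN x - pS x|.
Proof.
rewrite normrM mulrC distrC; apply: ler_wpM2r; first exact: normr_ge0.
rewrite ger0_norm ?invr_ge0 ?(ltW (pN_gt0 x)) //.
by rewrite lef_pV2 ?posrE ?pN_gt0.
Qed.

Lemma coefr_bd' x : `|(pS x - pN x) / (1 - pN x)| <= eta^-1 * `|pN x - pS x|.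
Proof.
rewrite normrM mulrC distrC; apply: ler_wpM2r; first exact: normr_ge0.
rewrite ger0_norm ?invr_ge0 ?(ltW (pN_lt1 x)) //.
by rewrite lef_pV2 ?posrE ?pN_lt1.
Qed.

Lemma rem_bound : hnorm (ipH S) (remainder S Pstar Pn) <=
  eta^-1 * (Rintegral (margX Pstar) setT (Dn true) + Rintegral (margX Pstar) setT (Dn false)).
Proof.
set r := remainder S Pstar Pn.
have ei : 0 <= eta^-1 by rewrite invr_ge0 ltW.
have hr : ipH S r r <= (eta^-1 * (Rintegral (margX Pstar) setT (Dn true)
          + Rintegral (margX Pstar) setT (Dn false))) * hnorm (ipH S) r.
  rewrite rem_ip.
  have bR : bmf (fun x => (eta^-1 * hnorm (ipH S) r) * (Dn true x + Dn false x)).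
    by apply: bmfZ; apply: bmfD; exact: bmf_Dn.
  apply: le_trans (Rint_le _ (bmf_rvec r) bR _) _.
    move=> x; rewrite /rvec (ipDl hH) !(ipZl hH).
    apply: le_trans (lerD (ip_le_sc _ _ _) (ip_le_sc _ _ _)) _.
    rewrite /Dn !mulrDr.
    have e1 a : hnorm (ipH S) (thS a x - thN a x) = hnorm (ipH S) (thN a x - thS a x).
      by rewrite -(hnormN hH) opprB.
    rewrite !e1.
    have n1 := hnorm_ge0 (ipH S) (thN true x - thS true x).
    have n0 := hnorm_ge0 (ipH S) (thN false x - thS false x).
    have nr := hnorm_ge0 (ipH S) r.
    apply: lerD.
      have -> : eta^-1 * hnorm (ipH S) r * (`|pN x - pS x| * hnorm (ipH S) (thN true x - thS true x))
        = (eta^-1 * `|pN x - pS x|) * hnorm (ipH S) (thN true x - thS true x) * hnorm (ipH S) r.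
        by rewrite -!mulrA; congr (_ * _); rewrite mulrC -mulrA.
      by apply: ler_wpM2r => //; apply: ler_wpM2r => //; exact: coefr_bd.
    have -> : eta^-1 * hnorm (ipH S) r * (`|pN x - pS x| * hnorm (ipH S) (thN false x - thS false x))
      = (eta^-1 * `|pN x - pS x|) * hnorm (ipH S) (thN false x - thS false x) * hnorm (ipH S) r.
      by rewrite -!mulrA; congr (_ * _); rewrite mulrC -mulrA.
    by apply: ler_wpM2r => //; apply: ler_wpM2r => //; exact: coefr_bd'.
  rewrite RintZ; last by apply: bmfD; exact: bmf_Dn.
  rewrite RintD; [|exact: bmf_Dn|exact: bmf_Dn].
  by rewrite mulrAC.
have n0 := hnorm_ge0 (ipH S) r.
have [->|np] := eqVneq (hnorm (ipH S) r) 0.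
  apply: mulr_ge0 => //; apply: addr_ge0; apply: Rintegral_ge0 => x _;
  by rewrite /Dn mulr_ge0 ?normr_ge0 ?hnorm_ge0.
have np' : 0 < hnorm (ipH S) r by rewrite lt0r np n0.
by move: hr; rewrite -(hnorm_sq hH) expr2 ler_pM2r.
Qed.

Lemma Dn_holder a : ((Rintegral (margX Pstar) setT (Dn a))%:E <=
  'N[margX Pstar]_(2%:E)[EFin \o (fun x => (pN x - pS x)%R)] *
  'N[margX Pstar]_(2%:E)[EFin \o (fun x => (hnorm (ipH S) (thN a x - thS a x))%R)])%E.
Proof.
have mf : measurable_fun setT (fun x => (pN x - pS x)%R) by exact: measurable_funB.
have mg : measurable_fun setT (fun x => hnorm (ipH S) (thN a x - thS a x)).
  apply: (wm_norm hH sepH) => h; under eq_fun do rewrite (ipBl hH).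
  by apply: measurable_funB; exact: mtheta.
have two : (2 : R)^-1 + 2^-1 = 1 by rewrite [in RHS](splitr 1) mul1r.
have := hoelder (margX Pstar) mf mg (ltr0n R 2) (ltr0n R 2) two.
rewrite Lnorm1; apply: le_trans; rewrite -Rint_EFin; last exact: bmf_Dn.
apply: ge0_le_integral => //.
- by move=> x _; rewrite lee_fin /Dn mulr_ge0 ?normr_ge0 ?hnorm_ge0.
- by apply: measurableT_comp => //; exact: (proj1 (bmf_Dn a)).
- apply: measurableT_comp => //; apply: measurableT_comp => //.
  exact: measurable_funM.
- move=> x _ /=; rewrite lee_fin /Dn normrM.
  by rewrite [`|hnorm _ _|]ger0_norm ?hnorm_ge0.
Qed.

Lemma det_bound : ((hnorm (ipH S) (remainder S Pstar Pn))%:E <=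
  (eta^-1)%R%:E *
  ('N[margX Pstar]_(2%:E)[EFin \o (fun x => (pN x - pS x)%R)] *
   'N[margX Pstar]_(2%:E)[EFin \o (fun x => (hnorm (ipH S) (thN true x - thS true x))%R)] +
   'N[margX Pstar]_(2%:E)[EFin \o (fun x => (pN x - pS x)%R)] *
   'N[margX Pstar]_(2%:E)[EFin \o (fun x => (hnorm (ipH S) (thN false x - thS false x))%R)]))%E.
Proof.
have h := rem_bound; rewrite -lee_fin in h; apply: le_trans h _.
rewrite EFinM EFinD; apply: lee_wpmul2l; first by rewrite lee_fin invr_ge0 ltW.
by apply: leeD; exact: Dn_holder.
Qed.

End Model.
Section Stoch.
Context {R : realType} {d : measure_display} {Omega : measurableType d}
  (Pr : probability Omega R).
Local Open Scope ereal_scope.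

Lemma powRD_nat (n : nat) (r s : R) : (1 <= n)%N ->
  (n%:R `^ (r + s) = n%:R `^ r * n%:R `^ s)%R.
Proof. by move=> n1; rewrite powRD // pnatr_eq0 -lt0n n1 implybT. Qed.

Lemma powR_mono_nat (n : nat) (r s : R) : (1 <= n)%N -> (r <= s)%R ->
  (n%:R `^ r <= n%:R `^ s)%R.
Proof. by move=> n1 rs; apply: ler_powR => //; rewrite ler1n. Qed.

Lemma not_in_le (B : set Omega) (F : Omega -> \bar R) (a : R) w :
  [set w | a%:E < F w] `<=` B -> ~ B w -> F w <= a%:E.
Proof. by move=> sub nB; rewrite leNgt; apply/negP => h; apply: nB; exact: sub. Qed.

Lemma stoch (Wr A B1 B0 : nat -> Omega -> \bar R) (c tau g1 g0 : R) :
  (0 < c)%R -> (forall n w, 0 <= A n w) -> (forall n w, 0 <= B1 n w) ->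
  (forall n w, 0 <= B0 n w) ->
  (forall n w, Wr n w <= c%:E * (A n w * B1 n w + A n w * B0 n w)) ->
  bigOp Pr A tau -> bigOp Pr B1 g1 -> bigOp Pr B0 g0 ->
  bigOp Pr Wr (tau + Num.min g1 g0).
Proof.
move=> c0 A0 B10 B00 hW hA hB1 hB0 eps eps0.
have e3 : (0 < eps / 3)%R by rewrite divr_gt0.
have [M1 [M10 [N1 HN1]]] := hA _ e3.
have [M2 [M20 [N2 HN2]]] := hB1 _ e3.
have [M3 [M30 [N3 HN3]]] := hB0 _ e3.
exists (c * M1 * (M2 + M3))%R; split.
  by rewrite !mulr_gt0 // addr_gt0.
exists (maxn (maxn N1 N2) (maxn N3 1)) => n Nn.
have n1 : (1 <= n)%N by apply: leq_trans Nn; rewrite !leq_max leqnn !orbT.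
have [C1 [mC1 sC1 pC1]] := HN1 n (leq_trans (leq_trans (leq_maxl N1 N2) (leq_maxl _ _)) Nn).
have [C2 [mC2 sC2 pC2]] := HN2 n (leq_trans (leq_trans (leq_maxr N1 N2) (leq_maxl _ _)) Nn).
have [C3 [mC3 sC3 pC3]] := HN3 n (leq_trans (leq_trans (leq_maxl N3 1) (leq_maxr _ _)) Nn).
exists (C1 `|` C2 `|` C3)%classic; split.
- by apply: measurableU => //; exact: measurableU.
- move=> w /= hw.
  have [w1|w1] := pselect (C1 w); first by left; left.
  have [w2|w2] := pselect (C2 w); first by left; right.
  have [w3|w3] := pselect (C3 w); first by right.
  exfalso; move: hw; apply/negP; rewrite -leNgt.
  have a1 := not_in_le sC1 w1; have a2 := not_in_le sC2 w2; have a3 := not_in_le sC3 w3.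
  apply: le_trans (hW n w) _.
  set t1 := (n%:R `^ (- tau))%R; set t2 := (n%:R `^ (- g1))%R; set t3 := (n%:R `^ (- g0))%R.
  set t := (n%:R `^ (- (tau + Num.min g1 g0)))%R.
  have h12 : (t1 * t2 <= t)%R.
    rewrite /t1 /t2 /t -powRD_nat //; apply: powR_mono_nat => //.
    by rewrite opprD lerD2l lerN2 ge_min lexx.
  have h13 : (t1 * t3 <= t)%R.
    rewrite /t1 /t3 /t -powRD_nat //; apply: powR_mono_nat => //.
    by rewrite opprD lerD2l lerN2 ge_min lexx orbT.
  have t10 : (0 <= t1)%R by exact: powR_ge0.
  have t20 : (0 <= t2)%R by exact: powR_ge0.
  have t30 : (0 <= t3)%R by exact: powR_ge0.
  apply: (@le_trans _ _ (c%:E * ((M1 * t1 * (M2 * t2))%R%:E + (M1 * t1 * (M3 * t3))%R%:E))).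
    apply: lee_wpmul2l; first by rewrite lee_fin ltW.
    apply: leeD; rewrite EFinM; apply: lee_pmul => //.
  rewrite -EFinD -EFinM lee_fin.
  have -> : (c * (M1 * t1 * (M2 * t2) + M1 * t1 * (M3 * t3)) =
             (c * M1) * (M2 * (t1 * t2) + M3 * (t1 * t3)))%R.
    by ring.
  rewrite -[X in (_ <= X)%R]mulrA; apply: ler_wpM2l; first by rewrite mulr_ge0 // ltW.
  rewrite mulrDl; apply: lerD; apply: ler_wpM2l => //; exact: ltW.
- apply: le_lt_trans (measureU2 _ _ _) _ => //; first exact: measurableU.
  apply: le_lt_trans (leeD2r _ (measureU2 _ _ _)) _ => //.
  have -> : eps = (eps / 3 + eps / 3 + eps / 3)%R by field.
  by rewrite !EFinD; apply: lteD => //; apply: lteD.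
Qed.

Lemma big_little (W : nat -> Omega -> \bar R) (r : R) :
  (1 / 2 < r)%R -> bigOp Pr W r -> littleop Pr W (1 / 2).
Proof.
move=> hr hW eps delta e0 d0.
have [M [M0 [N HN]]] := hW eps e0.
set s := (r - 1 / 2)%R.
have s0 : (0 < s)%R by rewrite subr_gt0.
set K := ((M / delta) `^ (s^-1))%R.
exists (maxn N (Num.truncn K).+1) => n Nn.
have [B [mB sB pB]] := HN n (leq_trans (leq_maxl _ _) Nn).
exists B; split => // w /= hw; apply: sB => /=; apply: le_lt_trans hw.
rewrite lee_fin.
have n1 : (1 <= n)%N by apply: leq_trans Nn; rewrite leq_max ltnS leq0n orbT.
have nK : (K <= n%:R)%R.
  apply: ltW; apply: lt_le_trans (truncnS_gt K) _.
  by rewrite ler_nat; apply: leq_trans Nn; exact: leq_maxr.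
have nps : (M / delta <= n%:R `^ s)%R.
  have -> : (M / delta = K `^ s)%R.
    by rewrite /K -powRrM mulVf ?gt_eqF // powRr1 // divr_ge0 // ltW.
  by apply: ge0_ler_powR; rewrite ?nnegrE ?powR_ge0 ?ler0n //; exact: ltW.
have -> : (- r = - (1 / 2) + - s)%R by rewrite /s; ring.
rewrite powRD_nat // mulrCA mulrC ler_wpM2r ?powR_ge0 //.
rewrite powRN -ler_pdivlMr; last by rewrite invr_gt0 powR_gt0 // ltr0n.
rewrite invrK -ler_pdivrMl // mulrC; exact: nps.
Qed.
End Stoch.

Unset Implicit Arguments.

Theorem lemmaF3 (R : realType) (dX dY : measure_display)
    (X : measurableType dX) (Y : measurableType dY)
    (HX HY H : lmodType R) (S : @tensor_rkhs R X Y HX HY H)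
    (Pcal : set (@dist_model R dX dY X Y)) (eta : R)
    (d : measure_display) (Omega : measurableType d) (Pr : probability Omega R)
    (Pstar : @dist_model R dX dY X Y)
    (Phat : nat -> Omega -> @dist_model R dX dY X Y)
    (tau gamma1 gamma0 : R) :
  (* standing assumptions: tensor-product RKHS, strong positivity of Pcal *)
  valid_tensor_rkhs S ->
  0 < eta ->
  (forall P, Pcal P -> wf_model P /\ (forall x, eta <= prop P x <= 1 - eta)) ->
  Pcal Pstar ->
  (forall (n : nat) (w : Omega), Pcal (Phat n w)) ->
  (* (i) *)
  0 < tau ->
  bigOp Pr (fun n w =>
    'N[margX Pstar]_(2%:E)[EFin \o (fun x => (prop (Phat n w) x - prop Pstar x)%R)]%E)
    tau ->
  (* (ii) *)
  0 < gamma1 ->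
  bigOp Pr (fun n w =>
    'N[margX Pstar]_(2%:E)[EFin \o (fun x =>
       (hnorm (ipH S) (theta S (Phat n w) true x - theta S Pstar true x))%R)]%E)
    gamma1 ->
  0 < gamma0 ->
  bigOp Pr (fun n w =>
    'N[margX Pstar]_(2%:E)[EFin \o (fun x =>
       (hnorm (ipH S) (theta S (Phat n w) false x - theta S Pstar false x))%R)]%E)
    gamma0 ->
  (* conclusion *)
  bigOp Pr (fun n w => (hnorm (ipH S) (remainder S Pstar (Phat n w)))%:E)
    (tau + Num.min gamma1 gamma0) /\
  (1 / 2 < tau + Num.min gamma1 gamma0 ->
   littleop Pr (fun n w => (hnorm (ipH S) (remainder S Pstar (Phat n w)))%:E)
     (1 / 2)).

Proof.
move=> VS eta0 hP PS PN tau0 hA g10 hB1 g00 hB0.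
case: VS => [[hX hY hH sepH] [dnX dnY] [_ _ tip dnT] [[[CX hCX] [CY hCY]] mkX mkY _ _]].
have [wfS bS] := hP _ PS.
have main : bigOp Pr (fun n w => (hnorm (ipH S) (remainder S Pstar (Phat n w)))%:E)
    (tau + Num.min gamma1 gamma0).
  apply: (@stoch _ _ _ Pr _ _ _ _ (eta^-1)) hA hB1 hB0.
  - by rewrite invr_gt0.
  - by move=> n w; exact: Lnorm_ge0.
  - by move=> n w; exact: Lnorm_ge0.
  - by move=> n w; exact: Lnorm_ge0.
  - move=> n w; have [wfN bN] := hP _ (PN n w).
    exact: (det_bound hX hY hH dnX dnY dnT tip hCX hCY mkX mkY sepH eta0 wfS wfN bS bN).
split => // hr; exact: big_little hr main.
Qed.
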